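(* Let $\xi\in X^\ast(T)$ be a dominant integral weight and $V_{\mathbb{R}}^\xi:=\{z\in V_{\mathbb{R}}:\lambda(z)\ge\mathrm{val}_L(\gamma_\xi^{dom}(\lambda))\text{ for all }\lambda\in\Lambda\}$. Then $V_{\mathbb{R}}^\xi=\{z\in V_{\mathbb{R}}:(z+\eta_L+\xi_L)^{dom}\le\eta_L+\xi_L\}$.
   Context: $L$ is a finite extension of $\mathbb{Q}_p$, $K$ a complete extension field of $\mathbb{Q}_p$ containing $L$; $|\ |_L$ normalized absolute value of $L$, $\pi_L$ a prime element, $\mathrm{val}_L:K^\times\to\mathbb{R}$ with $\mathrm{val}_L(L^\times)=\mathbb{Z}$. $G$ is the $L$-points of an $L$-split connected reductive group, $T$ a maximal $L$-split torus, $P$ a Borel subgroup containing $T$, $\Phi^+$ the roots positive for $P$, $W=N(T)/T$ acting on $T$ and $\Lambda$ by conjugation, $U_0$ a maximal compact subgroup special for $T$, $\Lambda=T/(U_0\cap T)$, $\lambda:T\to\Lambda$ the projection, $T^{--}=\{t:|\alpha(t)|_L\ge1\ \forall\alpha\in\Phi^+\}$, $\Lambda^{--}=\lambda(T^{--})$. $V_{\mathbb{R}}=\mathrm{Hom}(\Lambda,\mathbb{R})\cong X^\ast(T)\otimes\mathbb{R}$ via $\chi\mapsto\mathrm{val}_L\circ\chi$; $\lambda\in\Lambda$ is viewed as a linear form on $V_{\mathbb{R}}$. Partial order: $z\le z'$ iff $z'-z\in\sum_{\alpha\in\Phi^+}\mathbb{R}_{\ge0}\mathrm{val}_L\circ\alpha$;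 $z^{dom}$ is the unique dominant point in the $W$-orbit of $z$. $\xi_L:=\mathrm{val}_L\circ\xi$, $\eta$ is half the sum of the positive roots in $V_{\mathbb{R}}$, $\eta_L:=[L:\mathbb{Q}_p]\eta$. $\gamma_\xi(w,\lambda(t)):=\big(\prod_{\alpha\in\Phi^+\setminus{}^{w^{-1}}\Phi^+}|\alpha(t)|_L\big)\pi_L^{\mathrm{val}_L(\xi({}^wt))-\mathrm{val}_L(\xi(t))}$, and $\gamma_\xi^{dom}(\lambda):=\gamma_\xi(w,\lambda)$ for any $w$ with ${}^w\lambda\in\Lambda^{--}$. *)

(* Defs.v *)
From HB Require Import structures.
From mathcomp Require Import all_boot all_order all_algebra.
From mathcomp Require Import reals.
Set Implicit Arguments. Unset Strict Implicit. Unset Printing Implicit Defensive.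
Import Order.TTheory GRing.Theory Num.Theory.
Local Open Scope ring_scope.

(* X^*(T) and Lambda = T/(U_0 cap T) = X_*(T) are both Z^n = 'rV[int]_n,
   with the perfect pairing <chi, lam> = val_L(chi(t)) for lambda(t) = lam. *)
Definition pairZ (n : nat) (chi lam : 'rV[int]_n) : int :=
  \sum_(i < n) chi 0 i * lam 0 i.

(* lambda in Lambda viewed as a linear form on V_R = Hom(Lambda, R) = 'rV[R]_n *)
Definition pairR (R : realType) (n : nat) (lam : 'rV[int]_n) (z : 'rV[R]_n) : R :=
  \sum_(i < n) (lam 0 i)%:~R * z 0 i.

(* chi |-> val_L o chi, X^*(T) -> V_R *)
Definition embR (R : realType) (n : nat) (chi : 'rV[int]_n) : 'rV[R]_n :=
  map_mx (fun x : int => x%:~R) chi.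

Definition reflX (n : nat) (cor : 'rV[int]_n -> 'rV[int]_n) (a chi : 'rV[int]_n) :=
  chi - pairZ chi (cor a) *: a.
Definition reflL (n : nat) (cor : 'rV[int]_n -> 'rV[int]_n) (a lam : 'rV[int]_n) :=
  lam - pairZ a lam *: cor a.
Definition reflV (R : realType) (n : nat) (cor : 'rV[int]_n -> 'rV[int]_n)
  (a : 'rV[int]_n) (z : 'rV[R]_n) := z - pairR (cor a) z *: embR R a.

(* An element of W is represented by a word in the simple-or-not reflections
   (w = s_{a1} ... s_{ak}); its action on X^*, Lambda, V_R. *)
Definition actX n cor (w : seq 'rV[int]_n) chi := foldr (@reflX n cor) chi w.
Definition actL n cor (w : seq 'rV[int]_n) lam := foldr (@reflL n cor) lam w.
Definition actV (R : realType) n cor (w : seq 'rV[int]_n) (z : 'rV[R]_n) :=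
  foldr (@reflV R n cor) z w.
Definition inW n (Phi : seq 'rV[int]_n) (w : seq 'rV[int]_n) := all (mem Phi) w.

Definition root_datum n (Phi : seq 'rV[int]_n) (cor : 'rV[int]_n -> 'rV[int]_n) :=
  [/\ uniq Phi,
      forall a, a \in Phi -> pairZ a (cor a) = 2,
      forall a b, a \in Phi -> b \in Phi ->
        reflX cor a b \in Phi /\ cor (reflX cor a b) = reflL cor a (cor b)
    & forall a, a \in Phi -> 2%:Z *: a \notin Phi].

(* Phi^+ is the set of roots positive for a Borel P containing T *)
Definition positive_system n (Phi Phip : seq 'rV[int]_n) :=
  uniq Phip /\
  exists f : 'rV[int]_n, (forall a, a \in Phi -> pairZ a f != 0) /\
    (forall a, (a \in Phip) = (a \in Phi) && (0 < pairZ a f)).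

(* Lambda^{--} = lambda(T^{--}): |alpha(t)|_L >= 1, i.e. val_L(alpha(t)) <= 0 *)
Definition antidomL n (Phip : seq 'rV[int]_n) (lam : 'rV[int]_n) :=
  forall a, a \in Phip -> pairZ a lam <= 0.

Definition dominant_int n (Phip : seq 'rV[int]_n) cor (xi : 'rV[int]_n) :=
  forall a, a \in Phip -> 0 <= pairZ xi (cor a).

Definition domV (R : realType) n (Phip : seq 'rV[int]_n) cor (y : 'rV[R]_n) :=
  forall a, a \in Phip -> 0 <= pairR (cor a) y.

Definition leV (R : realType) n (Phip : seq 'rV[int]_n) (z z' : 'rV[R]_n) :=
  exists c : 'I_(size Phip) -> R, (forall i, 0 <= c i) /\
    z' - z = \sum_(i < size Phip) c i *: embR R (Phip`_i).

(* val_L(gamma_xi(w, lambda(t))) where [L:Q_p] = d: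
   val_L(|x|_L) = - d val_L(x) (since |pi_L|_L = q^{-1}, val_L(q) = e f = d),
   Phi^+ \ ^{w^{-1}}Phi^+ = {alpha in Phi^+ | ^w alpha notin Phi^+},
   val_L(xi(^w t)) = <xi, ^w lambda>. *)
Definition val_gamma (R : realType) n (Phip : seq 'rV[int]_n) cor (d : nat) (xi : 'rV[int]_n)
  (w : seq 'rV[int]_n) (lam : 'rV[int]_n) : R :=
  - (d%:R) * (\sum_(a <- Phip | actX cor w a \notin Phip) (pairZ a lam)%:~R)
  + (pairZ xi (actL cor w lam) - pairZ xi lam)%:~R.

(* V_R^xi ; gamma^dom(lambda) := gamma(w,lambda) for any w with ^w lambda in Lambda^{--} *)
Definition V_xi (R : realType) n (Phi Phip : seq 'rV[int]_n) cor (d : nat) (xi : 'rV[int]_n)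
  (z : 'rV[R]_n) :=
  forall (lam : 'rV[int]_n) (w : seq 'rV[int]_n), inW Phi w ->
    antidomL Phip (actL cor w lam) ->
    val_gamma R Phip cor d xi w lam <= pairR lam z.

(* eta = half sum of positive roots, eta_L = d eta *)
Definition etaV (R : realType) n (Phip : seq 'rV[int]_n) : 'rV[R]_n :=
  2^-1 *: \sum_(a <- Phip) embR R a.

(* (y)^dom <= x, with y^dom the (unique) dominant point of the W-orbit of y *)
Definition dom_le (R : realType) n (Phi Phip : seq 'rV[int]_n) cor (y x : 'rV[R]_n) :=
  forall w, inW Phi w -> domV Phip cor (actV cor w y) -> leV Phip (actV cor w y) x.

(* Main.v *)
Require Import Defs.
From HB Require Import structures.
From mathcomp Require Import all_boot all_order all_algebra.
From mathcomp Require Import reals ring lra zify.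
Set Implicit Arguments. Unset Strict Implicit. Unset Printing Implicit Defensive.
Import Order.TTheory GRing.Theory Num.Theory.
Local Open Scope ring_scope.

Lemma int_div4 (p q : int) : p * q = 4 -> 0 < p -> p = 1 \/ p = 2 \/ p = 4.
Proof.
move=> h hp.
have hq : 0 < q by rewrite -(pmulr_rgt0 _ hp) h.
have : p <= 4 by rewrite -h ler_peMr // ?ltW //; lia.
case: p h hp => // [[|[|[|[|[|m]]]]]] // h _ _; try lia.
Qed.

Section Basic.
Variable R : realType.
Variable n : nat.
Local Notation V := 'rV[R]_n.
Local Notation X := 'rV[int]_n.

Definition emb (a : X) : V := embR R a.
Definition dot (u v : V) : R := \sum_(i < n) u 0 i * v 0 i.

Lemma dotC u v : dot u v = dot v u.
Proof. by apply: eq_bigr => i _; rewrite mulrC. Qed.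
Lemma dotDl u v w : dot (u + v) w = dot u w + dot v w.
Proof. by rewrite /dot -big_split; apply: eq_bigr => i _; rewrite mxE mulrDl. Qed.
Lemma dotZl k u w : dot (k *: u) w = k * dot u w.
Proof. by rewrite /dot mulr_sumr; apply: eq_bigr => i _; rewrite mxE mulrA. Qed.
Lemma dotNl u w : dot (- u) w = - dot u w.
Proof. by rewrite -scaleN1r dotZl mulN1r. Qed.
Lemma dotBl u v w : dot (u - v) w = dot u w - dot v w.
Proof. by rewrite dotDl dotNl. Qed.
Lemma dot0l w : dot 0 w = 0.
Proof. by rewrite /dot big1 // => i _; rewrite mxE mul0r. Qed.
Lemma dotDr u v w : dot w (u + v) = dot w u + dot w v.
Proof. by rewrite dotC dotDl !(dotC w). Qed.
Lemma dotZr k u w : dot w (k *: u) = k * dot w u.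
Proof. by rewrite dotC dotZl dotC. Qed.
Lemma dotNr u w : dot w (- u) = - dot w u.
Proof. by rewrite dotC dotNl dotC. Qed.
Lemma dotBr u v w : dot w (u - v) = dot w u - dot w v.
Proof. by rewrite dotDr dotNr. Qed.
Lemma dot0r w : dot w 0 = 0.
Proof. by rewrite dotC dot0l. Qed.
Lemma dot_suml (I : Type) (s : seq I) (P : pred I) (F : I -> V) w :
  dot (\sum_(i <- s | P i) F i) w = \sum_(i <- s | P i) dot (F i) w.
Proof.
elim/big_rec2: _ => [|i y1 y2 _ <-]; first by rewrite dot0l.
by rewrite dotDl.
Qed.
Lemma dot_sumr (I : Type) (s : seq I) (P : pred I) (F : I -> V) w :
  dot w (\sum_(i <- s | P i) F i) = \sum_(i <- s | P i) dot w (F i).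
Proof. by rewrite dotC dot_suml; apply: eq_bigr => i _; rewrite dotC. Qed.
Lemma dot_ge0 u : 0 <= dot u u.
Proof. by apply: sumr_ge0 => i _; rewrite -expr2 sqr_ge0. Qed.
Lemma dot_eq0 u : dot u u = 0 -> u = 0.
Proof.
move=> h; apply/rowP => i; rewrite mxE.
have := h; rewrite /dot => /eqP; rewrite psumr_eq0; last by move=> j _; rewrite -expr2 sqr_ge0.
by move=> /allP /(_ i (mem_index_enum _)) /=; rewrite mulf_eq0 orbb => /eqP.
Qed.

Lemma embD a b : emb (a + b) = emb a + emb b.
Proof. by apply/rowP => i; rewrite !mxE intrD. Qed.
Lemma embN a : emb (- a) = - emb a.
Proof. by apply/rowP => i; rewrite !mxE intrN. Qed.
Lemma embB a b : emb (a - b) = emb a - emb b.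
Proof. by rewrite embD embN. Qed.
Lemma embZ (k : int) a : emb (k *: a) = k%:~R *: emb a.
Proof. by apply/rowP => i; rewrite !mxE intrM. Qed.
Lemma emb0 : emb 0 = 0.
Proof. by apply/rowP => i; rewrite !mxE. Qed.
Lemma emb_inj : injective emb.
Proof. move=> a b h; apply/rowP => i; have := congr1 (fun v : V => v 0 i) h; rewrite !mxE. exact: intr_inj. Qed.

Lemma pairRE lam z : pairR lam z = dot (emb lam) z.
Proof. by apply: eq_bigr => i _; rewrite /emb /embR mxE. Qed.
Lemma pairZE a b : (pairZ a b)%:~R = dot (emb a) (emb b) :> R.
Proof. rewrite /pairZ /dot /emb /embR rmorph_sum; apply: eq_bigr => i _; rewrite !mxE. exact: intrM. Qed.
Lemma pairZC (a b : X) : pairZ a b = pairZ b a.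
Proof. by apply: eq_bigr => i _; rewrite mulrC. Qed.

End Basic.
Section Roots.
Variable R : realType.
Variable n : nat.
Local Notation V := 'rV[R]_n.
Local Notation X := 'rV[int]_n.
Variables (Phi Phip : seq X) (cor : X -> X) (f : X).
Hypothesis rd : root_datum Phi cor.
Hypothesis uPhip : uniq Phip.
Hypothesis hf1 : forall a, a \in Phi -> pairZ a f != 0.
Hypothesis hf2 : forall a, (a \in Phip) = (a \in Phi) && (0 < pairZ a f).

Local Notation ev a := (emb R a).
Local Notation cv a := (emb R (cor a)).
Definition rV (a : X) (u : V) : V := u - dot (cv a) u *: ev a.
Definition tL (a : X) (k : V) : V := k - dot (ev a) k *: cv a.
Definition actTL (w : seq X) (k : V) := foldr tL k w.

Lemma uPhi : uniq Phi. Proof. by case: rd. Qed.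
Lemma coroot2 a : a \in Phi -> dot (ev a) (cv a) = 2.
Proof. by case: rd => _ h _ _ /h; rewrite -pairZE => ->. Qed.
Lemma reflX_Phi a b : a \in Phi -> b \in Phi -> reflX cor a b \in Phi.
Proof. by case: rd => _ _ h _ ha hb; case: (h a b ha hb). Qed.
Lemma cor_reflX a b : a \in Phi -> b \in Phi -> cor (reflX cor a b) = reflL cor a (cor b).
Proof. by case: rd => _ _ h _ ha hb; case: (h a b ha hb). Qed.
Lemma reflV_rV a u : reflV cor a u = rV a u.
Proof. by rewrite /reflV /rV pairRE. Qed.
Lemma emb_reflX a b : ev (reflX cor a b) = rV a (ev b).
Proof. by rewrite /reflX /rV embB embZ pairZE dotC. Qed.
Lemma emb_reflL a l : emb R (reflL cor a l) = tL a (emb R l).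
Proof. by rewrite /reflL /tL embB embZ pairZE. Qed.
Lemma dot_rV k a u : dot k (rV a u) = dot (tL a k) u.
Proof.
rewrite /rV /tL dotBr dotZr dotBl dotZl; congr (_ - _).
by rewrite mulrC dotC.
Qed.
Lemma dot_tL_rV a k u : a \in Phi -> dot (tL a k) (rV a u) = dot k u.
Proof.
move=> ha; rewrite dot_rV /tL !dotBl !dotZl dotBr dotZr coroot2 //.
set p := dot (ev a) k; set q := dot (cv a) u; set r := dot k u.
ring.
Qed.
Lemma rV_invol a u : a \in Phi -> rV a (rV a u) = u.
Proof.
move=> ha; rewrite {1}/rV dotBr dotZr (dotC (cv a) (ev a)) coroot2 // /rV.
by apply/rowP => i; rewrite !mxE; ring.
Qed.
Lemma tL_invol a k : a \in Phi -> tL a (tL a k) = k.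
Proof.
move=> ha; rewrite {1}/tL dotBr dotZr coroot2 // /tL.
by apply/rowP => i; rewrite !mxE; ring.
Qed.
Lemma reflX_invol a b : a \in Phi -> reflX cor a (reflX cor a b) = b.
Proof. by move=> ha; apply: (@emb_inj R); rewrite !emb_reflX rV_invol. Qed.
Lemma reflL_invol a l : a \in Phi -> reflL cor a (reflL cor a l) = l.
Proof. by move=> ha; apply: (@emb_inj R); rewrite !emb_reflL tL_invol. Qed.

Lemma perm_inj (T : eqType) (s : seq T) (g : T -> T) :
  uniq s -> injective g -> {in s, forall x, g x \in s} -> perm_eq (map g s) s.
Proof.
move=> us ig sg.
have um : uniq (map g s) by rewrite map_inj_uniq.
have sub : {subset map g s <= s} by move=> x /mapP [y ys ->]; exact: sg.
have [_ e] := uniq_min_size um sub (eq_leq (esym (size_map g s))).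
exact: uniq_perm.
Qed.

Lemma perm_reflX a : a \in Phi -> perm_eq (map (reflX cor a) Phi) Phi.
Proof.
move=> ha; apply: perm_inj uPhi _ _.
  by apply: (can_inj (g := reflX cor a)) => b; rewrite reflX_invol.
by move=> b hb; apply: reflX_Phi.
Qed.

Lemma dot_cv_rV a b u : a \in Phi -> b \in Phi ->
  dot (cv b) (rV a u) = dot (cv (reflX cor a b)) u.
Proof. by move=> ha hb; rewrite dot_rV cor_reflX // emb_reflL. Qed.

Lemma emb_actX w b : ev (actX cor w b) = foldr rV (ev b) w.
Proof. by elim: w => //= a w IH; rewrite emb_reflX IH. Qed.
Lemma actV_rV w u : actV cor w u = foldr rV u w.
Proof. by elim: w => //= a w IH; rewrite reflV_rV IH. Qed.
Lemma emb_actL w l : emb R (actL cor w l) = actTL w (emb R l).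
Proof. by elim: w => //= a w IH; rewrite emb_reflL IH. Qed.
Lemma actX_Phi w b : inW Phi w -> b \in Phi -> actX cor w b \in Phi.
Proof. elim: w => //= a w IH /andP [ha hw] hb; exact: reflX_Phi (IH hw hb). Qed.
Lemma cor_actX w b : inW Phi w -> b \in Phi -> cor (actX cor w b) = actL cor w (cor b).
Proof.
elim: w => //= a w IH /andP [ha hw] hb.
by rewrite cor_reflX // ?IH // actX_Phi.
Qed.
Lemma dot_act w k u : inW Phi w -> dot (actTL w k) (foldr rV u w) = dot k u.
Proof. elim: w => //= a w IH /andP [ha hw]; by rewrite dot_tL_rV // IH. Qed.
Lemma pairR_act w l (z : V) : inW Phi w -> pairR (actL cor w l) (actV cor w z) = pairR l z.
Proof. by move=> hw; rewrite !pairRE emb_actL actV_rV dot_act. Qed.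
Lemma pairZ_act w a l : inW Phi w -> pairZ (actX cor w a) (actL cor w l) = pairZ a l.
Proof.
move=> hw; apply: (@intr_inj R); rewrite !pairZE emb_actL emb_actX dotC dot_act //.
by rewrite dotC.
Qed.
Lemma perm_actX w : inW Phi w -> perm_eq (map (actX cor w) Phi) Phi.
Proof.
elim: w => /= [|a w IH /andP [ha hw]]; first by rewrite map_id.
have -> : map (fun x => reflX cor a (actX cor w x)) Phi = map (reflX cor a) (map (actX cor w) Phi)
  by rewrite -map_comp.
apply: perm_trans (perm_reflX ha); exact: perm_map (IH hw).
Qed.
Lemma inW_rev w : inW Phi w -> inW Phi (rev w).
Proof. by rewrite /inW all_rev. Qed.
Lemma actL_rev w l : inW Phi w -> actL cor w (actL cor (rev w) l) = l.
Proof.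
elim: w l => //= a w IH l /andP [ha hw].
rewrite rev_cons -cats1 /actL foldr_cat /=.
by rewrite -/(actL cor w _) -/(actL cor (rev w) _) IH // reflL_invol.
Qed.
Lemma pairZNl (a l : X) : pairZ (- a) l = - pairZ a l.
Proof. by rewrite /pairZ -sumrN; apply: eq_bigr => i _; rewrite mxE mulNr. Qed.
Lemma reflX_self a : a \in Phi -> reflX cor a a = - a.
Proof.
move=> ha; apply: (@emb_inj R); rewrite emb_reflX embN /rV (dotC (cv a)) coroot2 //.
by apply/rowP => i; rewrite !mxE; ring.
Qed.
Lemma PhiN a : a \in Phi -> - a \in Phi.
Proof. by move=> ha; rewrite -reflX_self // reflX_Phi. Qed.
Lemma Phip_Phi a : a \in Phip -> a \in Phi.
Proof. by rewrite hf2 => /andP []. Qed.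
Lemma Phi_split a : a \in Phi -> (a \in Phip) || (- a \in Phip).
Proof.
move=> ha; rewrite !hf2 ha PhiN //= pairZNl oppr_gt0.
by have := hf1 ha; case: ltgtP.
Qed.
Lemma PhipN a : a \in Phip -> (- a \in Phip) = false.
Proof. by rewrite !hf2 pairZNl oppr_gt0 => /andP [_ h]; rewrite ltNge ltW ?andbF. Qed.
Lemma perm_Phi : perm_eq Phi (Phip ++ map -%R Phip).
Proof.
apply: uniq_perm; first exact: uPhi.
  rewrite cat_uniq uPhip /=; apply/andP; split; last by rewrite map_inj_uniq //; exact: oppr_inj.
  apply/hasPn => x /mapP [y yP ->]; by rewrite /= PhipN.
move=> a; rewrite mem_cat; apply/idP/idP.
  move=> ha; case/orP: (Phi_split ha) => [->//|h]; apply/orP; right.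
  by apply/mapP; exists (- a) => //; rewrite opprK.
case/orP => [/Phip_Phi //|/mapP [b /Phip_Phi hb ->]]; exact: PhiN.
Qed.

Definition gform (F : X -> V) (u v : V) := \sum_(c <- Phi) dot (F c) u * dot (F c) v.
Lemma gformC F u v : gform F u v = gform F v u.
Proof. by apply: eq_bigr => c _; rewrite mulrC. Qed.
Lemma gformDl F u v w : gform F (u + v) w = gform F u w + gform F v w.
Proof. by rewrite /gform -big_split; apply: eq_bigr => c _; rewrite dotDr mulrDl. Qed.
Lemma gformZl F k u w : gform F (k *: u) w = k * gform F u w.
Proof. by rewrite /gform mulr_sumr; apply: eq_bigr => c _; rewrite dotZr mulrA. Qed.
Lemma gformNl F u w : gform F (- u) w = - gform F u w.
Proof. by rewrite -scaleN1r gformZl mulN1r. Qed.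
Lemma gformBl F u v w : gform F (u - v) w = gform F u w - gform F v w.
Proof. by rewrite gformDl gformNl. Qed.
Lemma gform0l F w : gform F 0 w = 0.
Proof. by rewrite /gform big1 // => c _; rewrite dot0r mul0r. Qed.
Lemma gform_suml F (I : Type) (s : seq I) (G : I -> V) w :
  gform F (\sum_(i <- s) G i) w = \sum_(i <- s) gform F (G i) w.
Proof.
elim/big_rec2: _ => [|i y1 y2 _ <-]; first by rewrite gform0l.
by rewrite gformDl.
Qed.
Lemma gform_sumr F (I : Type) (s : seq I) (G : I -> V) w :
  gform F w (\sum_(i <- s) G i) = \sum_(i <- s) gform F w (G i).
Proof. by rewrite gformC gform_suml; apply: eq_bigr => i _; rewrite gformC. Qed.
Lemma gformZr F k u w : gform F w (k *: u) = k * gform F w u.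
Proof. by rewrite gformC gformZl gformC. Qed.
Lemma gformNr F u w : gform F w (- u) = - gform F w u.
Proof. by rewrite gformC gformNl gformC. Qed.
Lemma gform_ge0 F u : 0 <= gform F u u.
Proof. by apply: sumr_ge0 => c _; rewrite -expr2 sqr_ge0. Qed.
Lemma gform_eq0 F u : gform F u u = 0 -> forall c, c \in Phi -> dot (F c) u = 0.
Proof.
move=> /eqP; rewrite psumr_eq0; last by move=> c _; rewrite -expr2 sqr_ge0.
move=> /allP h c /h /=; by rewrite mulf_eq0 orbb => /eqP.
Qed.
Lemma gform_ge_term F u c : c \in Phi -> dot (F c) u ^+ 2 <= gform F u u.
Proof.
move=> hc; rewrite /gform (perm_big _ (perm_to_rem hc)) big_cons -expr2 lerDl.
by apply: sumr_ge0 => i _; rewrite -expr2 sqr_ge0.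
Qed.

Local Notation B := (gform (fun c => cv c)).
Local Notation C := (gform (fun c => ev c)).

Lemma B_inv a u v : a \in Phi -> B (rV a u) (rV a v) = B u v.
Proof.
move=> ha; have hp : perm_eq Phi (map (reflX cor a) Phi) by rewrite perm_sym perm_reflX.
rewrite /gform [in RHS](perm_big _ hp) big_map.
by apply: eq_big_seq => c hc; rewrite !dot_cv_rV.
Qed.
Lemma rV_self a : a \in Phi -> rV a (ev a) = - ev a.
Proof. by move=> ha; rewrite -emb_reflX reflX_self // embN. Qed.
Lemma B_refl a u : a \in Phi -> dot (cv a) u * B (ev a) (ev a) = 2 * B u (ev a).
Proof.
move=> ha; have := B_inv u (ev a) ha.
rewrite rV_self // {1}/rV gformNr gformBl gformZl.
set q := dot (cv a) u; set x := B u (ev a); set y := B (ev a) (ev a).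
move=> h; lra.
Qed.
Lemma B_pos a : a \in Phi -> 0 < B (ev a) (ev a).
Proof.
move=> ha; apply: lt_le_trans (gform_ge_term _ _ ha).
by rewrite dotC coroot2 //; lra.
Qed.

Lemma dot_ev_tL c a k : dot (ev c) (tL a k) = dot (ev (reflX cor a c)) k.
Proof.
rewrite emb_reflX /tL /rV dotBr dotZr dotBl dotZl; congr (_ - _).
by rewrite mulrC dotC.
Qed.
Lemma C_inv a u v : a \in Phi -> C (tL a u) (tL a v) = C u v.
Proof.
move=> ha; have hp : perm_eq Phi (map (reflX cor a) Phi) by rewrite perm_sym perm_reflX.
rewrite /gform [in RHS](perm_big _ hp) big_map.
by apply: eq_big_seq => c hc; rewrite !dot_ev_tL.
Qed.
Lemma tL_self a : a \in Phi -> tL a (cv a) = - cv a.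
Proof.
move=> ha; rewrite /tL coroot2 //.
by apply/rowP => i; rewrite !mxE; ring.
Qed.
Lemma C_refl a u : a \in Phi -> dot (ev a) u * C (cv a) (cv a) = 2 * C u (cv a).
Proof.
move=> ha; have := C_inv u (cv a) ha.
rewrite tL_self // {1}/tL gformNr gformBl gformZl.
set q := dot (ev a) u; set x := C u (cv a); set y := C (cv a) (cv a).
move=> h; lra.
Qed.
Lemma C_pos a : a \in Phi -> 0 < C (cv a) (cv a).
Proof.
move=> ha; apply: lt_le_trans (gform_ge_term _ _ ha).
by rewrite coroot2 //; lra.
Qed.

Definition spanP (u : V) := exists s : seq (R * X),
  all (fun p => p.2 \in Phi) s /\ u = \sum_(p <- s) p.1 *: ev p.2.

Lemma nondeg u : spanP u -> (forall b, b \in Phi -> dot (cv b) u = 0) -> u = 0.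
Proof.
move=> [s [hs ->]] h0; set uu := \sum_(p <- s) _.
pose kap := \sum_(p <- s) (2 * p.1 / C (cv p.2) (cv p.2)) *: cv p.2.
have key : forall k, dot uu k = C k kap.
  move=> k; rewrite /uu dot_suml /kap gform_sumr; apply: eq_big_seq => p hp.
  have hp2 : p.2 \in Phi by move/allP: hs => /(_ p hp).
  rewrite gformZr dotZl; have := C_refl k hp2; have := C_pos hp2.
  set q := dot _ k; set y := C _ _; set x := C _ _ => yp e.
  have -> : q = 2 * x / y by rewrite -e mulfK // gt_eqF.
  by field; rewrite gt_eqF.
have h1 : dot uu kap = 0.
  rewrite dotC /kap dot_suml big1_seq // => p /andP [_ hp].
  have hp2 : p.2 \in Phi by move/allP: hs => /(_ p hp).
  by rewrite dotZl h0 ?mulr0.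
have h3 := gform_eq0 (etrans (esym (key kap)) h1).
have h4 : forall k, C k kap = 0.
  by move=> k; rewrite /gform big1_seq // => c /andP [_ hc]; rewrite h3 // mulr0.
by apply: dot_eq0; rewrite key h4.
Qed.
Lemma spanP_ev a : a \in Phi -> spanP (ev a).
Proof. by move=> ha; exists [:: (1, a)]; rewrite /= ha big_seq1 scale1r. Qed.
Lemma spanP_add u v : spanP u -> spanP v -> spanP (u + v).
Proof.
move=> [s [hs ->]] [t [ht ->]]; exists (s ++ t); rewrite all_cat hs ht.
by rewrite big_cat.
Qed.
Lemma spanP_scale k u : spanP u -> spanP (k *: u).
Proof.
move=> [s [hs ->]]; exists [seq (k * p.1, p.2) | p <- s]; split.
  by rewrite all_map; apply: sub_all hs => p.
by rewrite big_map scaler_sumr; apply: eq_bigr => p _; rewrite scalerA.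
Qed.
Lemma spanP_sub u v : spanP u -> spanP v -> spanP (u - v).
Proof. by move=> hu hv; apply: spanP_add hu _; rewrite -scaleN1r; apply: spanP_scale. Qed.
Lemma spanP0 : spanP 0.
Proof. by exists [::]; rewrite big_nil. Qed.
Lemma spanP_sum (I : Type) (s : seq I) (G : I -> V) :
  (forall i, spanP (G i)) -> spanP (\sum_(i <- s) G i).
Proof. by move=> h; elim/big_rec: _ => [|i y _ hy]; [exact: spanP0 | exact: spanP_add]. Qed.
Lemma nondegB u : spanP u -> B u u = 0 -> u = 0.
Proof. move=> hs h; apply: (nondeg hs) => b hb; exact: (gform_eq0 h hb). Qed.

Definition Delta := [seq a <- Phip | ~~ has (fun b => (a - b) \in Phip) Phip].
Local Notation r := (size Delta).
Definition coneD (u : V) := exists k : 'I_r -> R, (forall i, 0 <= k i) /\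
  u = \sum_(i < r) k i *: ev (Delta`_i).

Lemma Delta_Phip a : a \in Delta -> a \in Phip.
Proof. by rewrite mem_filter => /andP []. Qed.
Lemma uDelta : uniq Delta. Proof. exact: filter_uniq. Qed.
Lemma coneD0 : coneD 0.
Proof. by exists (fun _ => 0); split => // ; rewrite big1 // => i _; rewrite scale0r. Qed.
Lemma coneD_add u v : coneD u -> coneD v -> coneD (u + v).
Proof.
move=> [k [hk ->]] [l [hl ->]]; exists (fun i => k i + l i); split.
  by move=> i; rewrite addr_ge0.
by rewrite -big_split; apply: eq_bigr => i _; rewrite scalerDl.
Qed.
Lemma coneD_ev a : a \in Delta -> coneD (ev a).
Proof.
move=> ha; have hi : (index a Delta < r)%N by rewrite index_mem.
exists (fun i => if i == Ordinal hi then 1 else 0); split.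
  by move=> i; case: ifP.
rewrite (bigD1 (Ordinal hi)) //= eqxx scale1r nth_index // big1 ?addr0 //.
by move=> i /negbTE ->; rewrite scale0r.
Qed.
Lemma coneD_span u : coneD u -> spanP u.
Proof.
move=> [k [_ ->]]; apply: spanP_sum => i; apply: spanP_scale; apply: spanP_ev.
by apply: Phip_Phi; apply: Delta_Phip; apply: mem_nth.
Qed.
Lemma pairZDl (a b l : X) : pairZ (a + b) l = pairZ a l + pairZ b l.
Proof. by rewrite /pairZ -big_split; apply: eq_bigr => i _; rewrite mxE mulrDl. Qed.

Lemma posD a : a \in Phip -> coneD (ev a).
Proof.
move=> ha; move: {2}(absz (pairZ a f)).+1 (ltnSn (absz (pairZ a f))) => N.
elim: N a ha => // N IH a ha hN.
case hD: (a \in Delta); first exact: coneD_ev.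
move: hD; rewrite mem_filter ha andbT => /negbFE /hasP [b hb hab].
have -> : ev a = ev b + ev (a - b) by rewrite -embD addrC subrK.
have pa : 0 < pairZ a f by move: ha; rewrite hf2 => /andP [].
have pb : 0 < pairZ b f by move: hb; rewrite hf2 => /andP [].
have pab : 0 < pairZ (a - b) f by move: hab; rewrite hf2 => /andP [].
have e : pairZ a f = pairZ b f + pairZ (a - b) f by rewrite -pairZDl addrC subrK.
apply: coneD_add; [apply: IH hb _ | apply: IH hab _].
  by move: hN pb pab; rewrite e; move: (pairZ b f) (pairZ (a - b) f) => x y; lia.
by move: hN pb pab; rewrite e; move: (pairZ b f) (pairZ (a - b) f) => x y; lia.
Qed.
Lemma gform_sub_sq F u v :
  gform F (u - v) (u - v) = gform F u u - 2 * gform F u v + gform F v v.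
Proof.
rewrite !gformBl (gformC F u (u - v)) (gformC F v (u - v)) !gformBl (gformC F v u).
ring.
Qed.

Lemma no_one a b : a \in Delta -> b \in Delta -> pairZ a (cor b) = 1 -> False.
Proof.
move=> ha hb h.
have haP := Phip_Phi (Delta_Phip ha); have hbP := Phip_Phi (Delta_Phip hb).
have e : reflX cor b a = a - b by rewrite /reflX h scale1r.
have := reflX_Phi hbP haP; rewrite e => /Phi_split /orP [] h1.
  move: ha; rewrite mem_filter => /andP [/hasPn /(_ b (Delta_Phip hb))]; by rewrite h1.
move: hb; rewrite mem_filter => /andP [/hasPn /(_ a (Delta_Phip ha))]; by rewrite -opprB h1.
Qed.

Lemma obtuse a b : a \in Delta -> b \in Delta -> a != b -> B (ev a) (ev b) <= 0.
Proof.
move=> ha hb hab; rewrite leNgt; apply/negP => hpos.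
have haP := Phip_Phi (Delta_Phip ha); have hbP := Phip_Phi (Delta_Phip hb).
have e1 := B_refl (ev a) hbP; have e2 := B_refl (ev b) haP.
rewrite dotC -pairZE in e1; rewrite dotC -pairZE gformC in e2.
have Bb := B_pos hbP; have Ba := B_pos haP.
have p2 : 2 <= pairZ a (cor b).
  have : 0 < (pairZ a (cor b))%:~R :> R by rewrite -(pmulr_lgt0 _ Bb) e1; lra.
  rewrite ltr0z => h0; have h1 : pairZ a (cor b) != 1 by apply/eqP => /(no_one ha hb).
  by move: h0 h1; move: (pairZ a (cor b)) => x; lia.
have q2 : 2 <= pairZ b (cor a).
  have : 0 < (pairZ b (cor a))%:~R :> R by rewrite -(pmulr_lgt0 _ Ba) e2; lra.
  rewrite ltr0z => h0; have h1 : pairZ b (cor a) != 1 by apply/eqP => /(no_one hb ha).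
  by move: h0 h1; move: (pairZ b (cor a)) => x; lia.
have p2' : 2 <= (pairZ a (cor b))%:~R :> R by rewrite (ler_int R 2).
have q2' : 2 <= (pairZ b (cor a))%:~R :> R by rewrite (ler_int R 2).
have h0 : B (ev a - ev b) (ev a - ev b) = 0.
  apply/eqP; rewrite eq_le gform_ge0 andbT gform_sub_sq.
  move: e1 e2 p2' q2' Ba Bb hpos.
  set x := (pairZ a (cor b))%:~R; set y := (pairZ b (cor a))%:~R.
  set baa := B (ev a) (ev a); set bbb := B (ev b) (ev b); set bab := B (ev a) (ev b).
  move=> e1 e2 *; nra.
have := nondegB (spanP_sub (spanP_ev haP) (spanP_ev hbP)) h0.
move/eqP; rewrite subr_eq0 => /eqP /(@emb_inj R) e; by rewrite e eqxx in hab.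
Qed.

Lemma pos_zero (c : 'I_r -> R) : (forall i, 0 <= c i) ->
  \sum_(i < r) c i *: ev (Delta`_i) = 0 -> forall i, c i = 0.
Proof.
move=> hc h0.
have : dot (\sum_(i < r) c i *: ev (Delta`_i)) (emb R f) = 0 by rewrite h0 dot0l.
rewrite dot_suml => hs i.
have hpos : forall j : 'I_r, 0 < dot (ev (Delta`_j)) (emb R f).
  move=> j; rewrite -pairZE ltr0z.
  by have := Delta_Phip (mem_nth 0 (ltn_ord j)); rewrite hf2 => /andP [].
have hz : forall j : 'I_r, true -> 0 <= dot (c j *: ev (Delta`_j)) (emb R f).
  by move=> j _; rewrite dotZl mulr_ge0 // ltW.
have := @psumr_eq0P _ _ _ _ hz hs i isT.
rewrite dotZl => /eqP; rewrite mulf_eq0 => /orP [/eqP //|/eqP h].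
by have := hpos i; rewrite h ltxx.
Qed.
Lemma indep (k : 'I_r -> R) : \sum_(i < r) k i *: ev (Delta`_i) = 0 -> forall i, k i = 0.
Proof.
move=> h0.
pose kp i := if 0 <= k i then k i else 0; pose km i := if 0 <= k i then 0 else - k i.
have ek : forall i, k i = kp i - km i.
  by move=> i; rewrite /kp /km; case: ifP => _; [rewrite subr0 | rewrite opprK add0r].
have kp0 : forall i, 0 <= kp i by move=> i; rewrite /kp; case: ifP.
have km0 : forall i, 0 <= km i.
  by move=> i; rewrite /km; case: ifP => // /negbT; rewrite -ltNge oppr_ge0 => /ltW.
pose P := \sum_(i < r) kp i *: ev (Delta`_i).
pose Q := \sum_(i < r) km i *: ev (Delta`_i).
have ePQ : P = Q.
  apply/eqP; rewrite -subr_eq0 -h0 /P /Q -sumrB; apply/eqP/eq_bigr => i _.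
  by rewrite -scalerBl -ek.
have spP : spanP P.
  apply: spanP_sum => i; apply: spanP_scale; apply: spanP_ev.
  by apply: Phip_Phi; apply: Delta_Phip; apply: mem_nth.
have BP : B P P = 0.
  apply/eqP; rewrite eq_le gform_ge0 andbT.
  rewrite {2}ePQ /P /Q gform_suml; apply: sumr_le0 => i _.
  rewrite gformZl gform_sumr mulr_sumr; apply: sumr_le0 => j _.
  rewrite gformZr mulrCA.
  case: (lerP 0 (k j)) => hj; first by rewrite /km hj mul0r.
  apply: mulr_ge0_le0 => //.
  case: (lerP 0 (k i)) => hi; last first.
    have hn : ~~ (0 <= k i) by rewrite -ltNge.
    by rewrite /kp (negbTE hn) mul0r.
  apply: mulr_ge0_le0 => //; apply: obtuse; try (by apply: mem_nth).
  rewrite nth_uniq //; last exact: uDelta.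
  apply/negP => /eqP eij; have eij' : i = j by apply: val_inj.
  by move: hi; rewrite eij' leNgt hj.
have P0 := nondegB spP BP.
have hp := pos_zero kp0 P0.
have hq := pos_zero km0 (etrans (esym ePQ) P0).
by move=> i; rewrite ek hp hq subr0.
Qed.

Lemma prop_root a b c : a \in Phi -> b \in Phi -> ev b = c *: ev a -> 0 <= c -> b = a.
Proof.
move=> ha hb e hc.
have eP : (pairZ b (cor a))%:~R = c * 2 :> R by rewrite pairZE e dotZl coroot2.
have eQ : 2 = c * (pairZ a (cor b))%:~R :> R by rewrite pairZE -(coroot2 hb) e dotZl.
have ePQ : pairZ b (cor a) * pairZ a (cor b) = 4.
  apply: (@intr_inj R); rewrite intrM eP -mulrA mulrCA -eQ; lra.
have Ppos : 0 < pairZ b (cor a).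
  rewrite lt_neqAle; apply/andP; split.
    by apply/eqP => h; rewrite -h mul0r in ePQ.
  by rewrite -(ler_int R) eP mulr_ge0.
have rd4 : forall x, x \in Phi -> 2%:Z *: x \notin Phi by case: rd.
case: (int_div4 ePQ Ppos) => [h1|[h2|h4]].
- have ec : c = 2^-1 by move: eP; rewrite h1 => e1; lra.
  rewrite ec in e.
  have : ev a = ev (2%:Z *: b).
    by rewrite embZ e; apply/rowP => i; rewrite !mxE; lra.
  by move/(@emb_inj R) => ea; have := rd4 _ hb; rewrite -ea ha.
- have ec : c = 1 by move: eP; rewrite h2 => e1; lra.
  by move: e; rewrite ec scale1r => /(@emb_inj R).
- have ec : c = 2 by move: eP; rewrite h4 => e1; lra.
  have : ev b = ev (2%:Z *: a).
    by rewrite embZ e ec; apply/rowP => i; rewrite !mxE; lra.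
  by move/(@emb_inj R) => eb; have := rd4 _ ha; rewrite -eb hb.
Qed.
Lemma refl_pos a b : a \in Delta -> b \in Phip -> b != a -> reflX cor a b \in Phip.
Proof.
move=> ha hb hba.
have haP := Phip_Phi (Delta_Phip ha); have hbP := Phip_Phi hb.
apply/negPn/negP => hn.
have hs := reflX_Phi haP hbP.
have hneg : - reflX cor a b \in Phip by move: (Phi_split hs); rewrite (negbTE hn).
have [m [hm em]] := posD hb.
have [nn [hnn en]] := posD hneg.
have hi : (index a Delta < r)%N by rewrite index_mem.
pose j0 := Ordinal hi.
have eD : Delta`_j0 = a by rewrite /= nth_index.
set p := dot (cv a) (ev b).
have e1 : ev (- reflX cor a b) = - ev b + p *: ev a by rewrite embN emb_reflX /rV opprB addrC.
pose k i := m i + nn i - (if i == j0 then p else 0).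
have hk : \sum_(i < r) k i *: ev (Delta`_i) = 0.
  have -> : \sum_(i < r) k i *: ev (Delta`_i) =
     \sum_(i < r) m i *: ev (Delta`_i) + \sum_(i < r) nn i *: ev (Delta`_i)
     - \sum_(i < r) (if i == j0 then p else 0) *: ev (Delta`_i).
    by rewrite -big_split -sumrB; apply: eq_bigr => i _; rewrite /k !scalerBl scalerDl.
  rewrite -em -en e1 (bigD1 j0) //= eqxx eD big1 ?addr0; first by rewrite addrA subrr add0r subrr.
  by move=> i /negbTE ->; rewrite scale0r.
have hk0 := indep hk.
have mz : forall i, i != j0 -> m i = 0.
  move=> i /negbTE hi0; have := hk0 i; rewrite /k hi0 subr0 => h.
  by have := hm i; have := hnn i; lra.
have eb : ev b = m j0 *: ev a.
  rewrite em (bigD1 j0) //= eD big1 ?addr0 // => i hi0.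
  by rewrite mz // scale0r.
by have := prop_root haP hbP eb (hm j0); move/eqP; rewrite (negbTE hba).
Qed.

Lemma simple_test u : (forall a, a \in Delta -> 0 <= dot (cv a) u) ->
  forall b, b \in Phip -> 0 <= dot (cv b) u.
Proof.
move=> hD b hb; have hbP := Phip_Phi hb.
have e := B_refl u hbP.
have [m [hm em]] := posD hb.
have hB : 0 <= B u (ev b).
  rewrite em gform_sumr; apply: sumr_ge0 => i _; rewrite gformZr mulr_ge0 //.
  have hi : Delta`_i \in Delta by apply: mem_nth.
  have hiP := Phip_Phi (Delta_Phip hi).
  have := B_refl u hiP; have := B_pos hiP; have := hD _ hi.
  set x := dot _ u; set y := B _ _; set z := B u _ => hx hy ez.
  have : 0 <= x * y by rewrite mulr_ge0 // ltW.
  by rewrite ez; lra.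
have := B_pos hbP; move: e hB.
set x := dot _ u; set y := B _ _; set z := B u _ => ez hz hy.
by rewrite -(pmulr_lge0 _ hy) ez; lra.
Qed.
Definition coneP (u : V) := exists c : 'I_(size Phip) -> R, (forall i, 0 <= c i) /\
  u = \sum_(i < size Phip) c i *: emb R (Phip`_i).

Lemma coneP0 : coneP 0.
Proof. by exists (fun _ => 0); split => //; rewrite big1 // => i _; rewrite scale0r. Qed.
Lemma coneP_add u v : coneP u -> coneP v -> coneP (u + v).
Proof.
move=> [k [hk ->]] [l [hl ->]]; exists (fun i => k i + l i); split.
  by move=> i; rewrite addr_ge0.
by rewrite -big_split; apply: eq_bigr => i _; rewrite scalerDl.
Qed.
Lemma coneP_ev t a : 0 <= t -> a \in Phip -> coneP (t *: ev a).
Proof.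
move=> ht ha; have hi : (index a Phip < size Phip)%N by rewrite index_mem.
exists (fun i => if i == Ordinal hi then t else 0); split.
  by move=> i; case: ifP.
rewrite (bigD1 (Ordinal hi)) //= eqxx nth_index // big1 ?addr0 //.
by move=> i /negbTE ->; rewrite scale0r.
Qed.
Lemma coneD_coneP u : coneD u -> coneP u.
Proof.
move=> [k [hk ->]]; apply: (big_ind coneP coneP0 coneP_add) => i _.
by apply: coneP_ev => //; apply: Delta_Phip; apply: mem_nth.
Qed.

Lemma count_step a u : a \in Delta -> dot (cv a) u < 0 ->
  count (fun b => dot (cv b) (rV a u) < 0) Phip =
  (count (fun b => dot (cv b) u < 0) Phip).-1.
Proof.
move=> ha hu; have haP := Phip_Phi (Delta_Phip ha); have hp := Delta_Phip ha.
have pr := perm_to_rem hp.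
rewrite !(permP pr) /= hu.
have -> : dot (cv a) (rV a u) < 0 = false.
  by rewrite /rV dotBr dotZr (dotC (cv a) (ev a)) coroot2 //; apply/negbTE; rewrite -leNgt; lra.
rewrite add0n add1n /=.
have ur := rem_uniq a uPhip.
have prm : perm_eq (map (reflX cor a) (rem a Phip)) (rem a Phip).
  apply: perm_inj ur _ _.
    by apply: (can_inj (g := reflX cor a)) => b; rewrite reflX_invol.
  move=> b; rewrite !(mem_rem_uniq _ uPhip) => /andP [hba hbP] /=.
  rewrite inE refl_pos // andbT; apply/eqP => e.
  have : b = - a by rewrite -(reflX_invol b haP) e reflX_self.
  by move=> eb; move: hbP; rewrite eb PhipN.
rewrite -[in RHS](permP prm) count_map; apply: eq_in_count => b.
rewrite (mem_rem_uniq _ uPhip) => /andP [_ hb] /=.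
by rewrite dot_cv_rV // Phip_Phi.
Qed.

Lemma dom_exists u : exists w, [/\ inW Phi w, domV Phip cor (foldr rV u w) &
  coneP (foldr rV u w - u)].
Proof.
move: {2}(count (fun b => dot (cv b) u < 0) Phip) (erefl (count (fun b => dot (cv b) u < 0) Phip)) => N.
elim: N u => [|N IH] u hN.
  exists [::]; split => //=; last by rewrite subrr; exact: coneP0.
  move=> a ha; rewrite pairRE leNgt; apply/negP => hneg.
  have : has (fun b => dot (cv b) u < 0) Phip by apply/hasP; exists a.
  by rewrite has_count hN.
have [a ha hau] : exists2 a, a \in Delta & dot (cv a) u < 0.
  case hh: (has (fun a => dot (cv a) u < 0) Delta); first by move/hasP: hh.
  have hall : forall a, a \in Delta -> 0 <= dot (cv a) u.
    by move=> a ha; move/hasPn: hh => /(_ a ha); rewrite -leNgt.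
  have : has (fun b => dot (cv b) u < 0) Phip by rewrite has_count hN.
  move/hasP => [b hb]; by rewrite ltNge simple_test.
have [w [hw hd hc]] := IH (rV a u) (etrans (count_step ha hau) (congr1 predn hN)).
exists (w ++ [:: a]); rewrite foldr_cat /=; split => //.
  by rewrite /inW all_cat -/(inW Phi w) hw /= Phip_Phi ?Delta_Phip.
have -> : foldr rV (rV a u) w - u = (foldr rV (rV a u) w - rV a u) + (- dot (cv a) u) *: ev a.
  by rewrite /rV; apply/rowP => i; rewrite !mxE; ring.
apply: coneP_add hc _; apply: coneP_ev; first by rewrite oppr_ge0 ltW.
exact: Delta_Phip.
Qed.
Definition Amx : 'M[R]_(r, n) := \matrix_(i, j) (ev (Delta`_i)) 0 j.
Lemma row_Amx i : row i Amx = ev (Delta`_i).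
Proof. by apply/rowP => j; rewrite !mxE. Qed.
Lemma mulAmx (x : 'rV[R]_r) : x *m Amx = \sum_(i < r) x 0 i *: ev (Delta`_i).
Proof. by rewrite mulmx_sum_row; apply: eq_bigr => i _; rewrite row_Amx. Qed.
Lemma dot_mx (m : nat) (u : V) (M : 'M[R]_(n, m)) j : dot u (\row_l M l j) = (u *m M) 0 j.
Proof. by rewrite /dot mxE; apply: eq_bigr => l _; rewrite mxE. Qed.

Lemma dual_real v : (forall k : V, (forall a, a \in Delta -> 0 <= dot (ev a) k) -> 0 <= dot v k) ->
  coneD v.
Proof.
move=> hv.
have rf : row_free Amx.
  apply: inj_row_free => x; rewrite mulAmx => /indep h; apply/rowP => i.
  by rewrite mxE h.
have hsub : (v <= Amx)%MS.
  rewrite submxE; apply/eqP/rowP => j; rewrite [RHS]mxE.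
  set K := cokermx Amx.
  have hA : forall i : 'I_r, dot (ev (Delta`_i)) (\row_l K l j) = 0.
    move=> i; rewrite dot_mx -row_Amx -row_mul mulmx_coker !mxE //.
  have h1 := hv (\row_l K l j); have h2 := hv (- \row_l K l j).
  rewrite -dot_mx; apply/eqP; rewrite eq_le; apply/andP; split.
    rewrite -oppr_ge0 -dotNr; apply: h2 => a /(nthP 0) [i hi <-].
    by rewrite dotNr (hA (Ordinal hi)) oppr0.
  by apply: h1 => a /(nthP 0) [i hi <-]; rewrite (hA (Ordinal hi)).
have [D eD] := submxP hsub.
have [Bm eB] := row_freeP rf.
exists (fun i => D 0 i); split; last by rewrite eD mulAmx.
move=> i.
have : 0 <= dot v (\row_l Bm l i).
  apply: hv => a /(nthP 0) [l hl <-].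
  rewrite dot_mx -(row_Amx (Ordinal hl)) -row_mul eB !mxE.
  by case: (_ == _).
by rewrite dot_mx eD -mulmxA eB mulmx1.
Qed.
Lemma floor_term (a d : R) : -1 < d <= 0 -> - `|a| <= a * d.
Proof. move=> /andP [h1 h2]. case: (lerP 0 a) => ha. rewrite ger0_norm //. nra. rewrite ltr0_norm //. nra. Qed.

Lemma dual_int v : (forall mu : X, antidomL Phip mu -> dot (emb R mu) v <= 0) ->
  forall k : V, (forall a, a \in Phip -> 0 <= dot (ev a) k) -> 0 <= dot v k.
Proof.
move=> hv k hk; rewrite leNgt; apply/negP => hneg.
pose La (a : X) := \sum_(i < n) `|ev a 0 i|.
pose Kr := \sum_(a <- Phip) La a.
have La0 : forall a, 0 <= La a by move=> a; apply: sumr_ge0 => i _.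
have Kr0 : 0 <= Kr by apply: sumr_ge0 => a _.
have LaK : forall a, a \in Phip -> La a <= Kr.
  move=> a ha; rewrite /Kr (perm_big _ (perm_to_rem ha)) big_cons lerDl.
  by apply: sumr_ge0 => b _.
pose M : int := Num.floor Kr + 1.
have hM : Kr <= M%:~R by rewrite ltW // floorD1_gt.
have M0 : 0 <= M%:~R :> R by apply: le_trans hM.
pose fl (N : nat) : X := \row_i Num.floor (N%:R * k 0 i).
have flE : forall N i, -1 < (emb R (fl N)) 0 i - N%:R * k 0 i <= 0.
  move=> N i; rewrite /fl !mxE; set x := N%:R * k 0 i.
  have h1 := floor_le x; have h2 := floorD1_gt x; rewrite intrD in h2.
  apply/andP; split; lra.
pose mu (N : nat) : X := - fl N - M *: f.
have emu : forall N, emb R (mu N) = - emb R (fl N) - M%:~R *: emb R f.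
  by move=> N; rewrite /mu embB embN embZ.
have anti : forall N, antidomL Phip (mu N).
  move=> N a ha; rewrite -(ler_int R) pairZE emu dotBr dotNr dotZr.
  have h1 : N%:R * dot (ev a) k - La a <= dot (ev a) (emb R (fl N)).
    rewrite -subr_ge0 /La /dot mulr_sumr -!sumrB; apply: sumr_ge0 => i _.
    have := floor_term (ev a 0 i) (flE N i).
    move=> h; rewrite mulrBr in h; rewrite [N%:R * (_ * _)]mulrCA; lra.
  have h2 : 1 <= dot (ev a) (emb R f).
    rewrite -pairZE (ler_int R 1); by move: ha; rewrite hf2 => /andP [].
  have h3 : 0 <= N%:R * dot (ev a) k by rewrite mulr_ge0 // hk.
  have h4 := LaK a ha.
  set y := dot (ev a) (emb R f) in h2 *; set z := dot (ev a) (emb R (fl N)) in h1 *.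
  set mm := M%:~R in hM M0 *; nra.
pose Lv := \sum_(i < n) `|v 0 i|.
pose C := Lv + M%:~R * dot (emb R f) v.
have bound : forall N : nat, - (N%:R * dot v k) <= C.
  move=> N; have := hv _ (anti N); rewrite emu dotBl dotNl dotZl.
  have h1 : dot (emb R (fl N)) v <= N%:R * dot v k + Lv.
    rewrite -subr_ge0 /Lv /dot mulr_sumr -big_split -sumrB; apply: sumr_ge0 => i _ /=.
    have := floor_term (- v 0 i) (flE N i); rewrite normrN => h.
    rewrite mulrBr in h; rewrite [N%:R * (_ * _)]mulrCA; lra.
  rewrite /C; lra.
set e := - dot v k.
have he : 0 < e by rewrite oppr_gt0.
pose N := (Num.trunc (C / e)).+1.
have hN : C / e < N%:R by apply: truncnS_gt.
have hb := bound N; rewrite -mulrN -/e in hb.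
have : C < N%:R * e by rewrite -ltr_pdivrMr.
lra.
Qed.
Lemma dual_cone v : (forall mu : X, antidomL Phip mu -> dot (emb R mu) v <= 0) -> coneP v.
Proof.
move=> hv; apply: coneD_coneP; apply: dual_real => k hk; apply: dual_int => // a ha.
have [m [hm ->]] := posD ha; rewrite dot_suml; apply: sumr_ge0 => i _.
by rewrite dotZl mulr_ge0 // hk // mem_nth.
Qed.

Lemma S_claim w lam : inW Phi w -> antidomL Phip (actL cor w lam) ->
  2 * (\sum_(a <- Phip | actX cor w a \notin Phip) pairZ a lam) =
  \sum_(a <- Phip) pairZ a lam - \sum_(a <- Phip) pairZ a (actL cor w lam).
Proof.
move=> hw hanti; set mu := actL cor w lam.
have sPhi : forall nu, \sum_(a <- Phi) `|pairZ a nu| = 2 * \sum_(a <- Phip) `|pairZ a nu|.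
  move=> nu; rewrite (perm_big _ perm_Phi) big_cat big_map.
  under [X in _ + X = _]eq_bigr => a _ do rewrite pairZNl normrN.
  by rewrite mulr2n mulrDl mul1r.
have e1 : \sum_(a <- Phi) `|pairZ a lam| = \sum_(a <- Phi) `|pairZ a mu|.
  have hp : perm_eq Phi (map (actX cor w) Phi) by rewrite perm_sym perm_actX.
  rewrite [in RHS](perm_big _ hp) big_map.
  by apply: eq_big_seq => a ha; rewrite pairZ_act.
have e2 : \sum_(a <- Phip) `|pairZ a mu| = - \sum_(a <- Phip) pairZ a mu.
  rewrite -sumrN; apply: eq_big_seq => a ha; rewrite ler0_norm //; exact: hanti.
have e3 : \sum_(a <- Phip) `|pairZ a lam| = - \sum_(a <- Phip) pairZ a mu.
  rewrite -e2; apply: (@mulfI _ 2) => //; by rewrite -!sPhi.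
have e4 : 2 * (\sum_(a <- Phip | actX cor w a \notin Phip) pairZ a lam) =
    \sum_(a <- Phip) pairZ a lam + \sum_(a <- Phip) `|pairZ a lam|.
  rewrite big_mkcond mulr_sumr -big_split; apply: eq_big_seq => a ha /=.
  have hwa := actX_Phi hw (Phip_Phi ha).
  have ea : pairZ (actX cor w a) mu = pairZ a lam by rewrite pairZ_act.
  case: ifP => hn.
    have hneg : - actX cor w a \in Phip by move: (Phi_split hwa); rewrite (negbTE hn).
    have := hanti _ hneg; rewrite pairZNl ea oppr_le0 => h.
    by rewrite ger0_norm // mulr2n mulrDl mul1r.
  have := hanti _ (negbFE hn); rewrite ea => h.
  by rewrite ler0_norm // mulr0 subrr.
by rewrite e4 e3.
Qed.
Section Main.
Variables (d : nat) (xi : X).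
Local Notation x := ((d%:R : R) *: etaV R Phip + embR R xi).
Definition sumP (nu : X) := \sum_(a <- Phip) pairZ a nu.

Lemma pairR_x nu : pairR nu x = (d%:R : R) * 2^-1 * (sumP nu)%:~R + (pairZ xi nu)%:~R.
Proof.
rewrite pairRE /etaV dotDr !dotZr.
have -> : \sum_(a <- Phip) embR R a = \sum_(a <- Phip) emb R a by [].
rewrite dot_sumr /sumP rmorph_sum mulrA; congr (_ * _ + _).
  by apply: eq_bigr => a _; rewrite /= pairZE dotC.
by rewrite pairZE dotC.
Qed.

Lemma val_gamma_eq w lam : inW Phi w -> antidomL Phip (actL cor w lam) ->
  val_gamma R Phip cor d xi w lam = pairR (actL cor w lam) x - pairR lam x.
Proof.
move=> hw ha; have hS := S_claim hw ha.
rewrite /val_gamma !pairR_x -rmorph_sum /= intrB.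
have e : 2 * (\sum_(a <- Phip | actX cor w a \notin Phip) pairZ a lam)%:~R =
    (sumP lam)%:~R - (sumP (actL cor w lam))%:~R :> R.
  by rewrite /sumP -intrB -hS intrM.
have eS : (\sum_(a <- Phip | actX cor w a \notin Phip) pairZ a lam)%:~R =
    2^-1 * ((sumP lam)%:~R - (sumP (actL cor w lam))%:~R) :> R.
  by lra.
by rewrite eS; ring.
Qed.

Lemma coneP_anti v nu : coneP v -> antidomL Phip nu -> dot (emb R nu) v <= 0.
Proof.
move=> [c [hc ->]] hn; rewrite dot_sumr; apply: sumr_le0 => i _.
by rewrite dotZr dotC -pairZE mulr_ge0_le0 // lerz0 hn // mem_nth.
Qed.

Lemma pairR_add l (u v : V) : pairR l (u + v) = pairR l u + pairR l v.
Proof. by rewrite !pairRE dotDr. Qed.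

Definition Qcond (Y : V) := forall w nu, inW Phi w -> antidomL Phip nu ->
  pairR nu x <= pairR nu (actV cor w Y).

Lemma Vxi_Q z : V_xi Phi Phip cor d xi z <-> Qcond (z + x).
Proof.
split.
  move=> hV w nu hw hnu.
  have := hV (actL cor (rev w) nu) w hw; rewrite actL_rev // => /(_ hnu).
  rewrite val_gamma_eq ?actL_rev // => h.
  have e1 : pairR nu (actV cor w (z + x)) = pairR (actL cor (rev w) nu) (z + x).
    by rewrite -{1}(actL_rev nu hw) pairR_act.
  rewrite e1 pairR_add; lra.
move=> hQ lam w hw hanti; rewrite val_gamma_eq //.
have := hQ w _ hw hanti; rewrite pairR_act // pairR_add; lra.
Qed.

Lemma dom_Q Y : dom_le Phi Phip cor Y x <-> Qcond Y.
Proof.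
split.
  move=> hD w nu hw hnu.
  set u := actV cor w Y.
  have [w' [hw' hd hc]] := dom_exists u.
  have := hD (w' ++ w); rewrite /actV foldr_cat -/(actV cor w Y) -/u -/(actV cor w' u) actV_rV.
  rewrite /inW all_cat -/(inW Phi w') -/(inW Phi w) hw' hw => /(_ isT).
  move=> /(_ hd) hle.
  have hc2 : coneP (x - u).
    have -> : x - u = (x - foldr rV u w') + (foldr rV u w' - u) by rewrite addrA subrK.
    by apply: coneP_add.
  have := coneP_anti hc2 hnu; rewrite dotBr -!pairRE; lra.
move=> hQ w hw _.
suff : coneP (x - actV cor w Y) by [].
apply: dual_cone => mu hmu; have := hQ w mu hw hmu; rewrite dotBr -!pairRE; lra.
Qed.

Lemma main_sec z : V_xi Phi Phip cor d xi z <-> dom_le Phi Phip cor (z + x) x.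
Proof. by rewrite Vxi_Q dom_Q. Qed.
End Main.
End Roots.

Theorem lemma2p7 (R : realType) (n : nat) (Phi Phip : seq 'rV[int]_n)
  (cor : 'rV[int]_n -> 'rV[int]_n) (d : nat) (xi : 'rV[int]_n) :
  root_datum Phi cor -> positive_system Phi Phip -> (0 < d)%N ->
  dominant_int Phip cor xi ->
  forall z : 'rV[R]_n,
    V_xi Phi Phip cor d xi z <->
    dom_le Phi Phip cor (z + ((d%:R : R) *: etaV R Phip + embR R xi))
                        ((d%:R : R) *: etaV R Phip + embR R xi).
Proof.
move=> rd [uPhip [f [hf1 hf2]]] _ _ z.
exact: (main_sec rd uPhip hf1 hf2).
Qed.
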